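(* Let $r\le N$, let $\mathbf{S}\in\mathbb{R}^{N\times N}$ be skew-symmetric, and let $\mathbf{B}\in\mathbb{R}^{N\times r}$ have all singular values $\sigma_1(\mathbf{B}),\dots,\sigma_r(\mathbf{B})$ in $[0,1]$. Let $[\mathbf{S}]=\mathbf{B}^\top\mathbf{S}\mathbf{B}$ and $\mathbf{Y}=\mathbf{I}_N+\mathbf{B}\big(\exp([\mathbf{S}])-\mathbf{I}_r\big)\mathbf{B}^\top$. Then $$\|\mathbf{Y}^\top\mathbf{Y}-\mathbf{I}_N\|_2\le\big(e^{\|\mathbf{S}\|_2}-1\big)^2\max_i\big|\sigma_i(\mathbf{B})^2(\sigma_i(\mathbf{B})^2-1)\big|\le\tfrac14\big(e^{\|\mathbf{S}\|_2}-1\big)^2.$$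
   Context: $\|\cdot\|_2$ denotes the spectral norm and $\exp$ the matrix exponential. (In the paper $\mathbf{B}$ is the output of Newton–Schulz iterations $\mathbf{M}_{k+1}=\frac12\mathbf{M}_k(3\mathbf{I}-\mathbf{M}_k^\top\mathbf{M}_k)$ started from a matrix normalised by its Frobenius norm plus $\epsilon>0$, which guarantees singular values in $[0,1]$.) *)

(* Defs.v *)
From HB Require Import structures.
From mathcomp Require Import all_boot all_order all_algebra.
From mathcomp Require Import all_classical all_reals all_analysis.
Set Implicit Arguments. Unset Strict Implicit. Unset Printing Implicit Defensive.
Import Order.TTheory GRing.Theory Num.Theory.
Import numFieldNormedType.Exports.
Local Open Scope classical_set_scope.
Local Open Scope ring_scope.

Definition vnorm2 (R : realType) (n : nat) (v : 'cV[R]_n) : R :=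
  Num.sqrt (\sum_(i < n) v i 0 ^+ 2).

Definition specnorm (R : realType) (m n : nat) (A : 'M[R]_(m, n)) : R :=
  sup [set vnorm2 (A *m x) | x in [set x : 'cV[R]_n | vnorm2 x <= 1]].

Definition mxpow (R : realType) (n : nat) (A : 'M[R]_n) (k : nat) : 'M[R]_n :=
  iter k (mulmx A) 1%:M.

Definition expm (R : realType) (n : nat) (A : 'M[R]_n) : 'M[R]_n :=
  \matrix_(i, j) limn (fun K : nat =>
     (\sum_(k < K) (k`!%:R)^-1 *: mxpow A k) i j).

(* The sigma i are then the singular values of B. *)
Definition thin_svd (R : realType) (N r : nat) (B : 'M[R]_(N, r))
  (U : 'M[R]_(N, r)) (sigma : 'I_r -> R) (V : 'M[R]_r) : Prop :=
  [/\ U^T *m U = 1%:M, V^T *m V = 1%:M, V *m V^T = 1%:M,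
      (forall i, 0 <= sigma i) &
      B = U *m diag_mx (\row_i sigma i) *m V^T].

(* Main.v *)
Require Import Defs.
From HB Require Import structures.
From mathcomp Require Import all_boot all_order all_algebra.
From mathcomp Require Import all_classical all_reals all_analysis.
From mathcomp Require Import ring lra.
Import Order.TTheory GRing.Theory Num.Theory.
Import numFieldNormedType.Exports.
Local Open Scope ring_scope.
Section Lim. Set Implicit Arguments. Unset Strict Implicit. Variable R : realType.
Local Open Scope classical_set_scope.
Lemma cvg_sum_ord (m : nat) (f : 'I_m -> nat -> R) (l : 'I_m -> R) :
  (forall i, f i @ \oo --> l i) -> (fun K => \sum_(i < m) f i K) @ \oo --> \sum_(i < m) l i.
Proof.
move=> h; apply: (@cvg_big _ _ +%R 0 xpredT _ _ _ _ (fun i K => f i K)) => //.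
exact: add_continuous.
Qed.
Definition mlim {m n} (X : nat -> 'M[R]_(m,n)) (L : 'M[R]_(m,n)) :=
  forall i j, (fun K => X K i j) @ \oo --> L i j.
Lemma mlim_mul m n p (X : nat -> 'M[R]_(m,n)) (Y : nat -> 'M[R]_(n,p)) L M :
  mlim X L -> mlim Y M -> mlim (fun K => X K *m Y K) (L *m M).
Proof.
move=> hX hY i j; rewrite mxE.
under eq_cvg do rewrite mxE.
apply: cvg_sum_ord => l; exact: cvgM.
Qed.
Lemma mlim_add m n (X Y : nat -> 'M[R]_(m,n)) L M :
  mlim X L -> mlim Y M -> mlim (fun K => X K + Y K) (L + M).
Proof. move=> hX hY i j; rewrite mxE; under eq_cvg do rewrite mxE; exact: cvgD. Qed.
Lemma mlim_opp m n (X : nat -> 'M[R]_(m,n)) L :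
  mlim X L -> mlim (fun K => - X K) (- L).
Proof. move=> hX i j; rewrite mxE; under eq_cvg do rewrite mxE; exact: cvgN. Qed.
Lemma mlim_cst m n (L : 'M[R]_(m,n)) : mlim (fun _ => L) L.
Proof. move=> i j; exact: cvg_cst. Qed.
Lemma mlim_tr m n (X : nat -> 'M[R]_(m,n)) L : mlim X L -> mlim (fun K => (X K)^T) L^T.
Proof. move=> hX i j; rewrite mxE; under eq_cvg do rewrite mxE; exact: hX. Qed.
Lemma mlim_uniq m n (X : nat -> 'M[R]_(m,n)) L M : mlim X L -> mlim X M -> L = M.
Proof. move=> hL hM; apply/matrixP => i j; move: (hL i j) (hM i j); exact: cvg_unique. Qed.
Lemma mlim_ext m n (X Y : nat -> 'M[R]_(m,n)) L : (forall K, X K = Y K) -> mlim X L -> mlim Y L.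
Proof. move=> e h i j; have -> : (fun K => Y K i j) = (fun K => X K i j) by apply/funext => K; rewrite e. exact: h. Qed.
Lemma mxpowE n (A : 'M[R]_n) k : mxpow A k = A ^+ k.
Proof. by elim: k => [|k IH] //=; rewrite exprS -IH. Qed.
Definition psum n (A : 'M[R]_n) K := \sum_(k < K) (k`!%:R)^-1 *: A ^+ k.
Definition mxabs m n (A : 'M[R]_(m, n)) := \sum_i \sum_j `|A i j|.
Lemma mxabs_ge0 m n (A : 'M[R]_(m, n)) : 0 <= mxabs A.
Proof. by apply: sumr_ge0 => i _; apply: sumr_ge0. Qed.
Lemma entry_le_mxabs m n (A : 'M[R]_(m, n)) i : \sum_j `|A i j| <= mxabs A.
Proof.
rewrite /mxabs (bigD1 i) //= lerDl; apply: sumr_ge0 => *; apply: sumr_ge0 => *; exact: normr_ge0.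
Qed.
Lemma pow_entry_le n (A : 'M[R]_n) k i j : `|(A ^+ k) i j| <= mxabs A ^+ k.
Proof.
elim: k i j => [|k IH] i j.
  by rewrite expr0 !mxE; case: (i == j); rewrite ?normr1 ?normr0.
rewrite exprS mxE (le_trans (ler_norm_sum _ _ _)) //.
apply: (@le_trans _ _ (\sum_l `|A i l| * mxabs A ^+ k)).
  by apply: ler_sum => l _; rewrite normrM ler_wpM2l.
by rewrite -mulr_suml exprS ler_wpM2r ?exprn_ge0 ?mxabs_ge0 ?entry_le_mxabs.
Qed.
Lemma psum_entry n (A : 'M[R]_n) i j K :
  psum A K i j = series (fun k => (k`!%:R)^-1 * (A ^+ k) i j) K.
Proof. by rewrite /psum summxE /series /= big_mkord; apply: eq_bigr => k _; rewrite mxE. Qed.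
Lemma psum_cvg n (A : 'M[R]_n) i j : cvgn (fun K => psum A K i j).
Proof.
have -> : (fun K => psum A K i j) = series (fun k => (k`!%:R)^-1 * (A ^+ k) i j).
  by apply/funext => K; rewrite psum_entry.
apply: normed_cvg.
apply: (@series_le_cvg _ _ (exp_coeff (mxabs A))).
- by move=> k; rewrite normr_ge0.
- by move=> k; apply: exp_coeff_ge0; apply: mxabs_ge0.
- move=> k; rewrite /exp_coeff /= normrM [`|_^-1|]ger0_norm ?invr_ge0 ?ler0n // mulrC.
  by rewrite ler_wpM2r ?invr_ge0 ?ler0n ?pow_entry_le.
- have := is_cvg_series_exp_coeff (mxabs A); exact.
Qed.
Lemma expm_lim n (A : 'M[R]_n) : mlim (psum A) (expm A).
Proof.
move=> i j; rewrite /expm mxE.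
have -> : (fun K : nat => (\sum_(k < K) (k`!%:R)^-1 *: mxpow A k) i j) = (fun K => psum A K i j).
  by apply/funext => K; rewrite /psum; under eq_bigr do rewrite mxpowE.
exact: psum_cvg.
Qed.
Lemma tri_step (V : nmodType) (g : nat -> nat -> V) K :
  \sum_(k < K) \sum_(0 <= l < (K - k)%N) g k l = \sum_(n < K) \sum_(i < n.+1) g i (n - i)%N.
Proof.
elim: K => [|K IH]; first by rewrite !big_ord0.
rewrite big_ord_recr /= subSnn big_nat1 [RHS]big_ord_recr /= -IH.
rewrite [in RHS]big_ord_recr /= subnn addrA; congr (_ + _).
rewrite -big_split /=; apply: eq_bigr => k _.
by rewrite subSn ?(ltnW (ltn_ord k)) // big_nat_recr.
Qed.
Lemma tri_sq (V : nmodType) (g : nat -> nat -> V) K :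
  \sum_(k < K) \sum_(l < K) g k l =
  \sum_(n < K) \sum_(i < n.+1) g i (n - i)%N + \sum_(k < K) \sum_((K - k)%N <= l < K) g k l.
Proof.
rewrite -tri_step -big_split /=; apply: eq_bigr => k _.
by rewrite -(big_mkord xpredT (g k)) (@big_cat_nat _ _ _ (K - k)) // leq_subr.
Qed.
Definition gterm n (X Y : 'M[R]_n) k l := ((k`!%:R)^-1 * (l`!%:R)^-1) *: (X ^+ k * Y ^+ l).
Lemma psum_mul n (X Y : 'M[R]_n) K :
  psum X K * psum Y K = \sum_(k < K) \sum_(l < K) gterm X Y k l.
Proof.
rewrite /psum mulr_suml; apply: eq_bigr => k _; rewrite mulr_sumr; apply: eq_bigr => l _.
by rewrite /gterm -!mulmxE -scalemxAl -scalemxAr scalerA.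
Qed.
Lemma binom_scaled n (X Y : 'M[R]_n) m : GRing.comm X Y ->
  (m`!%:R)^-1 *: (X + Y) ^+ m = \sum_(i < m.+1) gterm X Y i (m - i)%N.
Proof.
move=> cXY; rewrite addrC exprDn_comm; last exact: commr_sym.
rewrite scaler_sumr; apply: eq_bigr => i _.
rewrite /gterm -(commrX _ (commr_sym (commrX _ cXY))) -[_ *+ 'C(m, i)]scaler_nat scalerA; congr (_ *: _).
have hi : (i <= m)%N by rewrite -ltnS.
have := bin_fact hi; move/(congr1 (fun z : nat => z%:R : R)); rewrite !natrM => e.
have f1 : (i`!%:R : R) != 0 by rewrite pnatr_eq0 -lt0n fact_gt0.
have f2 : ((m - i)`!%:R : R) != 0 by rewrite pnatr_eq0 -lt0n fact_gt0.
have fC : ('C(m, i)%:R : R) != 0 by rewrite pnatr_eq0 -lt0n bin_gt0.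
by rewrite -e !invfM mulrC !mulrA mulfV // mul1r.
Qed.
Lemma psum_prod_split n (X Y : 'M[R]_n) K : GRing.comm X Y ->
  psum X K * psum Y K = psum (X + Y) K + \sum_(k < K) \sum_((K - k)%N <= l < K) gterm X Y k l.
Proof.
move=> cXY; rewrite psum_mul tri_sq; congr (_ + _).
by rewrite /psum; apply: eq_bigr => m _; rewrite binom_scaled.
Qed.
Lemma binom_scaledR (x y : R) m :
  (m`!%:R)^-1 * (x + y) ^+ m = \sum_(i < m.+1) ((i`!%:R)^-1 * ((m - i)%N`!%:R)^-1) * (x ^+ i * y ^+ (m - i)%N).
Proof.
rewrite addrC exprDn mulr_sumr; apply: eq_bigr => i _.
rewrite [y ^+ _ * _]mulrC -[_ *+ 'C(m, i)]mulr_natr [_ * 'C(m, i)%:R]mulrC (mulrA (m`!%:R)^-1); congr (_ * _).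
have hi : (i <= m)%N by rewrite -ltnS.
have := bin_fact hi; move/(congr1 (fun z : nat => z%:R : R)); rewrite !natrM => e.
have fC : ('C(m, i)%:R : R) != 0 by rewrite pnatr_eq0 -lt0n bin_gt0.
by rewrite -e !invfM mulrC !mulrA mulfV // mul1r.
Qed.
Definition PS (x : R) K := \sum_(k < K) (k`!%:R)^-1 * x ^+ k.
Definition gs (c : R) k l := ((k`!%:R)^-1 * (l`!%:R)^-1) * (c ^+ k * c ^+ l).
Lemma PS_split (c : R) K :
  PS c K * PS c K = PS (c + c) K + \sum_(k < K) \sum_((K - k)%N <= l < K) gs c k l.
Proof.
have -> : PS c K * PS c K = \sum_(k < K) \sum_(l < K) gs c k l.
  rewrite /PS mulr_suml; apply: eq_bigr => k _; rewrite mulr_sumr; apply: eq_bigr => l _.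
  by rewrite /gs mulrACA.
rewrite tri_sq; congr (_ + _).
by rewrite /PS; apply: eq_bigr => m _; rewrite binom_scaledR.
Qed.
Lemma PS_cvg (x : R) : PS x @ \oo --> expR x.
Proof.
have -> : PS x = series (exp_coeff x).
  apply/funext => K; rewrite /PS /series /= big_mkord; apply: eq_bigr => k _.
  by rewrite /exp_coeff /= mulrC.
have := is_cvg_series_exp_coeff x; exact.
Qed.
Lemma Rs_cvg (c : R) : (fun K => \sum_(k < K) \sum_((K - k)%N <= l < K) gs c k l) @ \oo --> 0.
Proof.
have -> : (fun K => \sum_(k < K) \sum_((K - k)%N <= l < K) gs c k l) =
          (fun K => PS c K * PS c K - PS (c + c) K).
  by apply/funext => K; rewrite PS_split addrC addKr.
have -> : (0 : R) = expR c * expR c - expR (c + c) by rewrite expRD subrr.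
apply: cvgB; last exact: PS_cvg.
apply: cvgM; exact: PS_cvg.
Qed.
Lemma mlim_shift m n (X : nat -> 'M[R]_(m,n)) L : mlim (fun K => X K.+1) L -> mlim X L.
Proof. by move=> h i j; rewrite -cvg_shiftS; exact: h. Qed.
Lemma trmx_pow n (A : 'M[R]_n) k : (A ^+ k)^T = (A^T) ^+ k.
Proof.
elim: k => [|k IH]; first by rewrite !expr0 trmx1.
by rewrite exprS exprSr -IH -mulmxE trmx_mul mulmxE.
Qed.
Lemma psum_tr n (A : 'M[R]_n) K : (psum A K)^T = psum A^T K.
Proof.
rewrite /psum raddf_sum /=; apply: eq_bigr => k _.
by rewrite linearZ /= trmx_pow.
Qed.
Lemma exprN_mx n (A : 'M[R]_n) k : (- A) ^+ k = (-1) ^+ k *: A ^+ k.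
Proof.
elim: k => [|k IH]; first by rewrite !expr0 scale1r.
by rewrite exprS IH [in RHS]exprS mulN1r scaleNr exprS mulNr -!mulmxE scalemxAr.
Qed.
Lemma psum0 n K : psum (0 : 'M[R]_n) K.+1 = 1.
Proof.
rewrite /psum big_ord_recl /= expr0 fact0 invr1 scale1r big1 ?addr0 // => k _.
by rewrite expr0n /= scaler0.
Qed.
Lemma gterm_le n (A : 'M[R]_n) k l i j : `|(gterm (- A) A k l) i j| <= gs (mxabs A) k l.
Proof.
rewrite /gterm /gs mxE normrM ger0_norm; last by rewrite mulr_ge0 ?invr_ge0 ?ler0n.
apply: ler_wpM2l; first by rewrite mulr_ge0 ?invr_ge0 ?ler0n.
rewrite exprN_mx -mulmxE -scalemxAl mulmxE -exprD mxE normrM normrX normrN1 expr1n mul1r.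
by rewrite -exprD pow_entry_le.
Qed.
Lemma expm_orth n (A : 'M[R]_n) : A^T = - A -> (expm A)^T *m expm A = 1%:M.
Proof.
move=> skA.
have h1 : mlim (fun K => psum (- A) K * psum A K) ((expm A)^T *m expm A).
  apply: mlim_mul; last exact: expm_lim.
  apply: (@mlim_ext _ _ (fun K => (psum A K)^T)); first by move=> K; rewrite psum_tr skA.
  exact/mlim_tr/expm_lim.
have cA : GRing.comm (- A) A by rewrite /GRing.comm mulNr mulrN.
have h2 : mlim (fun K => psum (- A) K * psum A K) (1%:M + 0).
  apply: mlim_shift.
  apply: (@mlim_ext _ _ (fun K => 1%:M + \sum_(k < K.+1) \sum_((K.+1 - k)%N <= l < K.+1) gterm (- A) A k l)).
    by move=> K; rewrite psum_prod_split // addNr psum0.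
  apply: mlim_add; first exact: mlim_cst.
  move=> i j; rewrite mxE.
  have hR := Rs_cvg (mxabs A); rewrite -cvg_shiftS in hR.
  apply: (@squeeze_cvgr _ _ _ _ (fun K => - \sum_(k < K.+1) \sum_((K.+1 - k)%N <= l < K.+1) gs (mxabs A) k l) (fun K => \sum_(k < K.+1) \sum_((K.+1 - k)%N <= l < K.+1) gs (mxabs A) k l)); last 2 first.
  - have := cvgN hR; rewrite oppr0; exact.
  - have := hR; exact.
  apply: nearW => K.
  have hb : `|(\sum_(k < K.+1) \sum_((K.+1 - k)%N <= l < K.+1) gterm (- A) A k l) i j| <=
      \sum_(k < K.+1) \sum_((K.+1 - k)%N <= l < K.+1) gs (mxabs A) k l.
    rewrite summxE (le_trans (ler_norm_sum _ _ _)) //; apply: ler_sum => k _.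
    rewrite summxE (le_trans (ler_norm_sum _ _ _)) //; apply: ler_sum => l _.
    exact: gterm_le.
  by rewrite -ler_norml.
by rewrite (mlim_uniq h1 h2) addr0.
Qed.
End Lim.
Section Vec. Set Implicit Arguments. Unset Strict Implicit. Variable R : realType.
Local Open Scope classical_set_scope.
Definition dot n (u v : 'cV[R]_n) := \sum_i u i 0 * v i 0.
Lemma dotE n (u v : 'cV[R]_n) : dot u v = (u^T *m v) 0 0.
Proof. by rewrite /dot mxE; apply: eq_bigr => i _; rewrite mxE. Qed.
Lemma dot_mul m n (M : 'M[R]_(m, n)) u v : dot (M *m u) v = dot u (M^T *m v).
Proof. by rewrite !dotE trmx_mul mulmxA. Qed.
Lemma dotC n (u v : 'cV[R]_n) : dot u v = dot v u.
Proof. by apply: eq_bigr => i _; rewrite mulrC. Qed.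
Lemma dot_ge0 n (u : 'cV[R]_n) : 0 <= dot u u.
Proof. by apply: sumr_ge0 => i _; rewrite -expr2 sqr_ge0. Qed.
Lemma vnormE n (u : 'cV[R]_n) : vnorm2 u = Num.sqrt (dot u u).
Proof. by rewrite /vnorm2 /dot; congr Num.sqrt; apply: eq_bigr => i _; rewrite expr2. Qed.
Lemma vnorm_ge0 n (u : 'cV[R]_n) : 0 <= vnorm2 u.
Proof. by rewrite vnormE sqrtr_ge0. Qed.
Lemma vnorm_sq n (u : 'cV[R]_n) : vnorm2 u ^+ 2 = dot u u.
Proof. by rewrite vnormE sqr_sqrtr ?dot_ge0. Qed.
Lemma dot0_eq n (u : 'cV[R]_n) : dot u u = 0 -> forall i, u i 0 = 0.
Proof.
move=> /eqP; rewrite psumr_eq0 => [/allP h i|i _]; last by rewrite -expr2 sqr_ge0.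
by have /(_ (mem_index_enum i))/implyP/(_ isT) := h i; rewrite mulf_eq0 orbb => /eqP.
Qed.
Lemma CS n (u v : 'cV[R]_n) : dot u v <= vnorm2 u * vnorm2 v.
Proof.
set a := vnorm2 u; set b := vnorm2 v.
have a0 : 0 <= a by exact: vnorm_ge0.
have b0 : 0 <= b by exact: vnorm_ge0.
have [a0e|ap] := eqVneq a 0.
  have /dot0_eq h : dot u u = 0 by rewrite -vnorm_sq -/a a0e expr0n.
  by rewrite a0e mul0r /dot big1 // => i _; rewrite h mul0r.
have [b0e|bp] := eqVneq b 0.
  have /dot0_eq h : dot v v = 0 by rewrite -vnorm_sq -/b b0e expr0n.
  by rewrite b0e mulr0 /dot big1 // => i _; rewrite h mulr0.
have ha : 0 < a by rewrite lt_neqAle eq_sym ap a0.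
have hb : 0 < b by rewrite lt_neqAle eq_sym bp b0.
have e : \sum_i (b * u i 0 - a * v i 0) ^+ 2 = b ^+ 2 * dot u u - (2 * a * b) * dot u v + a ^+ 2 * dot v v.
  rewrite /dot !mulr_sumr -sumrB -big_split /=; apply: eq_bigr => i _; ring.
have h0 : 0 <= \sum_i (b * u i 0 - a * v i 0) ^+ 2 by apply: sumr_ge0 => i _; exact: sqr_ge0.
rewrite e -!vnorm_sq -/a -/b in h0.
have hab : 0 < a * b by rewrite mulr_gt0.
have : 0 <= (a * b) * (a * b - dot u v) by nra.
by rewrite pmulr_rge0 // subr_ge0.
Qed.
Lemma vnormD n (u v : 'cV[R]_n) : vnorm2 (u + v) <= vnorm2 u + vnorm2 v.
Proof.
have h : dot (u + v) (u + v) = dot u u + 2 * dot u v + dot v v.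
  rewrite /dot mulr_sumr -!big_split /=; apply: eq_bigr => i _; rewrite !mxE; ring.
rewrite [X in X <= _]vnormE h -[_ + vnorm2 v]ger0_norm ?addr_ge0 ?vnorm_ge0 // -sqrtr_sqr.
rewrite ler_sqrt; last by rewrite sqr_ge0.
have := CS u v; rewrite -!vnorm_sq; nra.
Qed.
Lemma vnormZ n (a : R) (u : 'cV[R]_n) : vnorm2 (a *: u) = `|a| * vnorm2 u.
Proof.
rewrite !vnormE -sqrtr_sqr -sqrtrM ?sqr_ge0 //; congr Num.sqrt.
rewrite /dot mulr_sumr; apply: eq_bigr => i _; rewrite !mxE; ring.
Qed.
Lemma vnorm0 n : vnorm2 (0 : 'cV[R]_n) = 0.
Proof. by rewrite -(scale0r 0) vnormZ normr0 mul0r. Qed.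
Lemma vnorm_sum n m (f : 'I_m -> 'cV[R]_n) : vnorm2 (\sum_i f i) <= \sum_i vnorm2 (f i).
Proof.
elim/big_rec2: _ => [|i y1 y2 _ h]; first by rewrite vnorm0.
by rewrite (le_trans (vnormD _ _)) // lerD2l.
Qed.
End Vec.
Section Op. Set Implicit Arguments. Unset Strict Implicit. Variable R : realType.
Local Open Scope classical_set_scope.
Definition opb m n (M : 'M[R]_(m, n)) (c : R) := forall x, vnorm2 (M *m x) <= c * vnorm2 x.
Lemma opb_mul m n p (M : 'M[R]_(m, n)) (P : 'M[R]_(n, p)) a b :
  0 <= a -> opb M a -> opb P b -> opb (M *m P) (a * b).
Proof.
move=> a0 hM hP x; rewrite -mulmxA (le_trans (hM _)) // -mulrA ler_wpM2l //.
Qed.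
Lemma opb_le m n (M : 'M[R]_(m, n)) a b : opb M a -> a <= b -> opb M b.
Proof. by move=> h ab x; rewrite (le_trans (h x)) // ler_wpM2r ?vnorm_ge0. Qed.
Lemma opb_add m n (M P : 'M[R]_(m, n)) a b : opb M a -> opb P b -> opb (M + P) (a + b).
Proof.
move=> hM hP x; rewrite mulmxDl (le_trans (vnormD _ _)) // mulrDl lerD //.
Qed.
Lemma opb_scale m n (M : 'M[R]_(m, n)) a s : opb M a -> opb (s *: M) (`|s| * a).
Proof. by move=> h x; rewrite -scalemxAl vnormZ -mulrA ler_wpM2l. Qed.
Lemma opb_opp m n (M : 'M[R]_(m, n)) a : opb M a -> opb (- M) a.
Proof. by move=> h; have := opb_scale (-1) h; rewrite normrN1 mul1r scaleN1r. Qed.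
Lemma opb_sum m n k (F : 'I_k -> 'M[R]_(m, n)) c :
  (forall i, opb (F i) (c i)) -> opb (\sum_i F i) (\sum_i c i).
Proof.
move=> h x; rewrite mulmx_suml (le_trans (vnorm_sum _)) // mulr_suml.
by apply: ler_sum => i _; exact: h.
Qed.
Lemma opb_ge0 m n (M : 'M[R]_(m, n)) a : (0 < n)%N -> opb M a -> 0 <= a.
Proof.
move=> n0 h; pose x : 'cV[R]_n := delta_mx (Ordinal n0) 0.
have hx : vnorm2 x = 1.
  rewrite vnormE /dot (bigD1 (Ordinal n0)) //= big1 => [|i /negPf ni]; last by rewrite !mxE ni mul0r.
  by rewrite !mxE eqxx /= mulr1 addr0 sqrtr1.
by have := h x; rewrite hx mulr1; apply: le_trans; exact: vnorm_ge0.
Qed.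
Lemma opb_tr m n (M : 'M[R]_(m, n)) a : 0 <= a -> opb M a -> opb M^T a.
Proof.
move=> a0 h y; set t := vnorm2 (M^T *m y).
have t0 : 0 <= t by exact: vnorm_ge0.
have e : t ^+ 2 = dot (M *m (M^T *m y)) y by rewrite /t vnorm_sq [RHS]dot_mul.
have : t ^+ 2 <= a * t * vnorm2 y.
  rewrite e (le_trans (CS _ _)) // ler_wpM2r ?vnorm_ge0 //; exact: h.
have [t0e|tp] := eqVneq t 0; first by rewrite t0e mulr_ge0 ?vnorm_ge0.
have tp' : 0 < t by rewrite lt_neqAle eq_sym tp t0.
move: tp t0; rewrite /t; move: (vnorm2 _) => s sp s0 hs.
have sp2 : 0 < s by rewrite lt_neqAle eq_sym sp s0.
by move: hs; rewrite expr2 [a * s]mulrC -mulrA ler_pM2l.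
Qed.
Lemma opb_iso m n (U : 'M[R]_(m, n)) : U^T *m U = 1%:M -> opb U 1.
Proof.
move=> hU x; rewrite mul1r !vnormE dot_mul mulmxA hU mul1mx //.
Qed.
Lemma opb_diag n (d : 'I_n -> R) c : 0 <= c -> (forall i, `|d i| <= c) -> opb (diag_mx (\row_i d i)) c.
Proof.
move=> c0 h x; rewrite !vnormE -[c]ger0_norm // -sqrtr_sqr -sqrtrM ?sqr_ge0 // ler_sqrt ?mulr_ge0 ?sqr_ge0 ?dot_ge0 //.
rewrite /dot mulr_sumr; apply: ler_sum => i _; rewrite mul_diag_mx !mxE.
have : d i ^+ 2 <= c ^+ 2 by have := h i; rewrite ler_norml => /andP[h1 h2]; nra.
move=> hd; rewrite -!expr2 exprMn ler_wpM2r ?sqr_ge0 //.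
Qed.
Lemma opb_1 n : opb (1%:M : 'M[R]_n) 1.
Proof. by move=> x; rewrite mul1mx mul1r. Qed.
Lemma opb_pow n (M : 'M[R]_n) a k : 0 <= a -> opb M a -> opb (M ^+ k) (a ^+ k).
Proof.
move=> a0 h; elim: k => [|k IH]; first by rewrite !expr0; exact: opb_1.
by rewrite !exprS; apply: opb_mul.
Qed.
Lemma vnorm_delta n (i : 'I_n) : vnorm2 (delta_mx i 0 : 'cV[R]_n) = 1.
Proof.
rewrite vnormE /dot (bigD1 i) //= big1 => [|k /negPf ni]; last by rewrite !mxE ni mul0r.
by rewrite !mxE eqxx /= mulr1 addr0 sqrtr1.
Qed.
Lemma vnorm_le_abs n (v : 'cV[R]_n) : vnorm2 v <= \sum_i `|v i 0|.
Proof.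
rewrite {1}(matrix_sum_delta v) (le_trans (vnorm_sum _)) //; apply: ler_sum => i _.
rewrite big_ord1 vnormZ vnorm_delta mulr1 //.
Qed.
Lemma entry_le_vnorm n (x : 'cV[R]_n) j : `|x j 0| <= vnorm2 x.
Proof.
rewrite vnormE -sqrtr_sqr ler_sqrt ?dot_ge0 // /dot (bigD1 j) //= expr2 lerDl.
by apply: sumr_ge0 => i _; rewrite -expr2 sqr_ge0.
Qed.
Lemma opb_mxabs m n (M : 'M[R]_(m, n)) : opb M (mxabs M).
Proof.
move=> x; rewrite (le_trans (vnorm_le_abs _)) // /mxabs mulr_suml; apply: ler_sum => i _.
rewrite mxE (le_trans (ler_norm_sum _ _ _)) // mulr_suml; apply: ler_sum => j _.
by rewrite normrM ler_wpM2l // entry_le_vnorm.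
Qed.
Lemma specnorm_hassup m n (M : 'M[R]_(m, n)) :
  has_sup [set vnorm2 (M *m x) | x in [set x : 'cV[R]_n | vnorm2 x <= 1]].
Proof.
split; first by exists (vnorm2 (M *m 0)), 0; rewrite //= vnorm0 ler01.
exists (mxabs M) => _ [x /= hx <-]; rewrite (le_trans (opb_mxabs M x)) //.
by rewrite -[X in _ <= X]mulr1 ler_wpM2l // mxabs_ge0.
Qed.
Lemma specnorm_opb m n (M : 'M[R]_(m, n)) : opb M (specnorm M).
Proof.
move=> x; have t0 := vnorm_ge0 x.
have [t0e|tp] := eqVneq (vnorm2 x) 0.
  have hx : x = 0.
    apply/matrixP => i j; rewrite (ord1 j) mxE; apply: dot0_eq.
    by rewrite -vnorm_sq t0e expr0n.
  by rewrite t0e hx mulmx0 vnorm0 mulr0.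
have tp' : 0 < vnorm2 x by rewrite lt_neqAle eq_sym tp t0.
have hy : vnorm2 ((vnorm2 x)^-1 *: x) <= 1 by rewrite vnormZ ger0_norm ?invr_ge0 // mulVf.
have := sup_upper_bound (specnorm_hassup M) (ex_intro2 _ _ ((vnorm2 x)^-1 *: x) hy erefl).
rewrite -scalemxAr vnormZ ger0_norm ?invr_ge0 // -/(specnorm M).
by rewrite ler_pdivrMl // mulrC.
Qed.
Lemma specnorm_le m n (M : 'M[R]_(m, n)) c : 0 <= c -> opb M c -> specnorm M <= c.
Proof.
move=> c0 h; apply: ge_sup; first by exists (vnorm2 (M *m 0)), 0; rewrite //= vnorm0 ler01.
move=> _ [x /= hx <-]; rewrite (le_trans (h x)) //.
by rewrite -[X in _ <= X]mulr1 ler_wpM2l.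
Qed.
End Op.
Section Main. Set Implicit Arguments. Unset Strict Implicit. Variable R : realType.
Local Open Scope classical_set_scope.
Lemma key_alg N r (B : 'M[R]_(N, r)) (Q : 'M[R]_r) : Q^T *m Q = 1%:M ->
  (1%:M + B *m (Q - 1%:M) *m B^T)^T *m (1%:M + B *m (Q - 1%:M) *m B^T) - 1%:M
  = B *m ((Q - 1%:M)^T *m (B^T *m B - 1%:M) *m (Q - 1%:M)) *m B^T.
Proof.
move=> hQ.
have tE : (Q - 1%:M)^T = Q^T - 1%:M by apply/matrixP => i j; rewrite !mxE eq_sym.
have hE : (Q - 1%:M)^T *m (Q - 1%:M) = - ((Q - 1%:M)^T + (Q - 1%:M)).
  rewrite tE mulmxBl !mulmxBr hQ mul1mx !mulmx1.
  by apply/matrixP => i j; rewrite !mxE; ring.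
move: hE; move: (Q - 1%:M) => E hE.
have tY : (1%:M + B *m E *m B^T)^T = 1%:M + B *m E^T *m B^T.
  by rewrite linearD /= trmx1 !trmx_mul trmxK mulmxA.
rewrite tY mulmxDl !mulmxDr !mul1mx mulmx1.
rewrite mulmxN mulmx1 mulmxDl mulNmx hE opprK !mulmxDr !mulmxDl -!mulmxA.
move: (B *m (E *m B^T)) (B *m (E^T *m B^T)) (B *m (E^T *m (B^T *m (B *m (E *m B^T))))) => a b c.
by apply/matrixP => i j; rewrite !mxE; ring.
Qed.
Lemma conj_pow r (V X : 'M[R]_r) k : V^T *m V = 1%:M -> V^T *m (V *m X *m V^T) ^+ k *m V = X ^+ k.
Proof.
move=> hV; elim: k => [|k IH]; first by rewrite !expr0 mulmx1 hV.
by rewrite !exprS -!mulmxE !mulmxA hV mul1mx -IH !mulmxA.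
Qed.
Lemma psum_conj r (V X : 'M[R]_r) K : V^T *m V = 1%:M -> V^T *m psum (V *m X *m V^T) K *m V = psum X K.
Proof.
move=> hV; rewrite /psum mulmx_sumr mulmx_suml; apply: eq_bigr => k _.
by rewrite -scalemxAr -scalemxAl conj_pow.
Qed.
Lemma pow_sand r (Sg K0 : 'M[R]_r) k :
  (Sg *m K0 *m Sg) ^+ k.+1 = Sg *m ((K0 *m Sg *m Sg) ^+ k *m K0) *m Sg.
Proof.
elim: k => [|k IH]; first by rewrite expr1 expr0 mul1mx.
by rewrite exprS IH [in RHS]exprS -!mulmxE !mulmxA.
Qed.
Definition Gs r (Sg K0 : 'M[R]_r) K := \sum_(k < K) ((k.+1)`!%:R)^-1 *: ((K0 *m Sg *m Sg) ^+ k *m K0).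
Lemma psum_sand r (Sg K0 : 'M[R]_r) K : psum (Sg *m K0 *m Sg) K.+1 - 1%:M = Sg *m Gs Sg K0 K *m Sg.
Proof.
rewrite /psum big_ord_recl /= expr0 fact0 invr1 scale1r addrAC subrr add0r.
rewrite /Gs mulmx_sumr mulmx_suml; apply: eq_bigr => k _.
by rewrite /bump leq0n add1n -scalemxAr -scalemxAl pow_sand.
Qed.
Lemma PS_le (s : R) K : 0 <= s -> PS s K <= expR s.
Proof.
move=> s0; have -> : PS s = series (exp_coeff s).
  apply/funext => k; rewrite /PS /series /= big_mkord; apply: eq_bigr => i _.
  by rewrite /exp_coeff /= mulrC.
apply: nondecreasing_cvgn_le; last by have := is_cvg_series_exp_coeff s; exact.
by apply: nondecreasing_series => n _; rewrite /exp_coeff /= mulr_ge0 ?exprn_ge0 ?invr_ge0 ?ler0n.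
Qed.
Lemma opb_Gs r (Sg K0 : 'M[R]_r) s K : 0 <= s -> opb K0 s -> opb Sg 1 ->
  opb (Gs Sg K0 K) (expR s - 1).
Proof.
move=> s0 hK hS.
have hW : opb (K0 *m Sg *m Sg) s by rewrite -[s]mulr1 -[s * 1]mulr1; apply: opb_mul => //; [rewrite mulr_ge0|apply: opb_mul].
apply: (opb_le (a := \sum_(k < K) `|((k.+1)`!%:R)^-1| * (s ^+ k * s))).  
  apply: opb_sum => k; apply: opb_scale; apply: opb_mul => //; [exact: exprn_ge0|exact: opb_pow].
have := PS_le K.+1 s0; rewrite /PS big_ord_recl /= expr0 fact0 invr1 mul1r.
rewrite addrC -lerBrDr => h; apply: le_trans h; apply: ler_sum => k _.
by rewrite ger0_norm ?invr_ge0 ?ler0n // -exprSr.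
Qed.
End Main.
Section Main2. Set Implicit Arguments. Unset Strict Implicit. Variable R : realType.
Local Open Scope classical_set_scope.
Lemma opb_lim m n (X : nat -> 'M[R]_(m, n)) L c : mlim X L -> (forall K, opb (X K) c) -> opb L c.
Proof.
move=> hX hb x.
have hc : 0 <= c * vnorm2 x by exact: le_trans (vnorm_ge0 _) (hb 0%N x).
have hL : mlim (fun K => X K *m x) (L *m x) := mlim_mul hX (@mlim_cst _ _ _ x).
have hd : (fun K => dot (X K *m x) (X K *m x)) @ \oo --> dot (L *m x) (L *m x).
  by apply: cvg_sum_ord => i; apply: cvgM; exact: hL.
have hle : dot (L *m x) (L *m x) <= (c * vnorm2 x) ^+ 2.
  apply: (ler_cvg_to hd (cvg_cst _)); apply: nearW => K; rewrite -vnorm_sq.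
  have := hb K x; have := vnorm_ge0 (X K *m x); nra.
by rewrite vnormE -(ger0_norm hc) -sqrtr_sqr ler_sqrt // sqr_ge0.
Qed.
Lemma mlim_shiftS m n (X : nat -> 'M[R]_(m,n)) L : mlim X L -> mlim (fun K => X K.+1) L.
Proof. by move=> h i j; have := h i j; rewrite -cvg_shiftS; exact. Qed.
Lemma specnorm_ge0 m n (M : 'M[R]_(m, n)) : 0 <= specnorm M.
Proof.
have h : vnorm2 (0 : 'cV[R]_n) <= 1 by rewrite vnorm0 ler01.
have := sup_upper_bound (specnorm_hassup M) (ex_intro2 _ _ 0 h erefl).
by rewrite mulmx0 vnorm0.
Qed.
Lemma diag_sand r (sg : 'I_r -> R) :
  let Sg := diag_mx (\row_i sg i) in
  Sg *m (Sg *m Sg - 1%:M) *m Sg = diag_mx (\row_i (sg i * (sg i * sg i - 1) * sg i)).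
Proof.
move=> Sg; apply/matrixP => i j; rewrite /Sg mulmx_diag mul_mx_diag mul_diag_mx !mxE.
by case: eqP => [->|_]; rewrite /= ?mulr1n ?mulr0n ?subr0 ?mulr0 ?mul0r //; ring.
Qed.
End Main2.
Theorem theorem3 (R : realType) (N r : nat) (S : 'M[R]_N) (B : 'M[R]_(N, r))
    (U : 'M[R]_(N, r)) (sigma : 'I_r -> R) (V : 'M[R]_r) :
  (r <= N)%N ->
  S^T = - S ->
  thin_svd B U sigma V ->
  (forall i, 0 <= sigma i <= 1) ->
  let Y := 1%:M + B *m (expm (B^T *m S *m B) - 1%:M) *m B^T in
  specnorm (Y^T *m Y - 1%:M)
    <= (expR (specnorm S) - 1) ^+ 2 *
       \big[Num.max/0]_(i < r) `|sigma i ^+ 2 * (sigma i ^+ 2 - 1)|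
  /\ (expR (specnorm S) - 1) ^+ 2 *
       \big[Num.max/0]_(i < r) `|sigma i ^+ 2 * (sigma i ^+ 2 - 1)|
    <= 4^-1 * (expR (specnorm S) - 1) ^+ 2.
Proof.
move=> hrN skS [hU hV1 hV2 hs0 hB] hs Y.
set s := specnorm S.
set mm := \big[Num.max/0]_(i < r) `|sigma i ^+ 2 * (sigma i ^+ 2 - 1)|.
have s0 : 0 <= s by exact: specnorm_ge0.
have g0 : 0 <= expR s - 1 by rewrite subr_ge0 (le_trans _ (expR_ge1Dx s)) // lerDl.
have mm0 : 0 <= mm.
  rewrite /mm; elim/big_rec: _ => // i y _ hy; by rewrite le_max hy orbT.
have mmi : forall i, `|sigma i ^+ 2 * (sigma i ^+ 2 - 1)| <= mm.
  by move=> i; rewrite /mm; apply: (le_bigmax 0 (fun i => `|sigma i ^+ 2 * (sigma i ^+ 2 - 1)|) i).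
have mm14 : mm <= 4^-1.
  rewrite /mm; apply: bigmax_le => [|i _]; first by rewrite invr_ge0.
  have /andP[h0 h1] := hs i.
  have a0 : 0 <= sigma i ^+ 2 by rewrite sqr_ge0.
  have a1 : sigma i ^+ 2 <= 1 by rewrite expr_le1.
  move: a0 a1; move: (sigma i ^+ 2) => t a0 a1.
  rewrite ler0_norm; last by nra.
  have := sqr_ge0 (t - 2^-1).
  have e : (4^-1 : R) = 2^-1 * 2^-1 by rewrite -invfM; congr (_^-1); rewrite -natrM.
  rewrite e; nra.
split; last by rewrite mulrC ler_wpM2r // sqr_ge0.
set Sg := diag_mx (\row_i sigma i).
set K0 := U^T *m S *m U.
have tSg : Sg^T = Sg by rewrite tr_diag_mx.
have oSg : opb Sg 1.
  apply: opb_diag => // i; rewrite ger0_norm; have /andP[] := hs i => //.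
have oU : opb U 1 by exact: opb_iso.
have oUt : opb U^T 1 by apply: opb_tr => //.
have oK : opb K0 s.
  have h1 := opb_mul ler01 oUt (specnorm_opb S).
  have h2 := opb_mul (mulr_ge0 ler01 s0) h1 oU.
  by move: h2; rewrite mul1r mulr1.
have hA : B^T *m S *m B = V *m (Sg *m K0 *m Sg) *m V^T.
  by rewrite hB !trmx_mul trmxK tSg /K0 !mulmxA.
have skA : (B^T *m S *m B)^T = - (B^T *m S *m B).
  by rewrite !trmx_mul trmxK skS mulNmx mulmxN mulmxA.
have hQ := expm_orth skA.
rewrite /Y key_alg //.
have hBB : B^T *m B - 1%:M = V *m (Sg *m Sg - 1%:M) *m V^T.
  rewrite hB !trmx_mul trmxK tSg mulmxBr mulmxBl mulmx1 hV2.
  by rewrite !mulmxA -[V *m Sg *m U^T *m U]mulmxA hU mulmx1.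
rewrite hBB.
set Q := expm (B^T *m S *m B).
set D := Sg *m Sg - 1%:M.
have hF : mlim (fun K => Sg *m Gs Sg K0 K *m Sg) (V^T *m (Q - 1%:M) *m V).
  have h1 : mlim (fun K => V^T *m psum (B^T *m S *m B) K *m V) (V^T *m Q *m V).
    apply: mlim_mul; last exact: mlim_cst.
    apply: mlim_mul; first exact: mlim_cst.
    exact: expm_lim.
  have e : V^T *m (Q - 1%:M) *m V = V^T *m Q *m V - 1%:M by rewrite mulmxBr mulmxBl mulmx1 hV1.
  rewrite e.
  apply: (@mlim_ext _ _ _ (fun K => psum (Sg *m K0 *m Sg) K.+1 - 1%:M)); first by move=> K; rewrite psum_sand.
  apply: (@mlim_shiftS _ _ _ (fun K => psum (Sg *m K0 *m Sg) K - 1%:M)).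
  apply: mlim_add; last exact: mlim_cst.
  by apply: mlim_ext h1 => K; rewrite hA psum_conj.
have eT : B *m ((Q - 1%:M)^T *m (V *m D *m V^T) *m (Q - 1%:M)) *m B^T =
    U *m Sg *m ((V^T *m (Q - 1%:M) *m V)^T *m D *m (V^T *m (Q - 1%:M) *m V)) *m Sg *m U^T.
  by rewrite hB !trmx_mul !trmxK tSg !mulmxA.
rewrite eT.
apply: specnorm_le; first by rewrite mulr_ge0 ?sqr_ge0.
apply: (@opb_lim _ _ _ (fun K => U *m Sg *m ((Sg *m Gs Sg K0 K *m Sg)^T *m D *m (Sg *m Gs Sg K0 K *m Sg)) *m Sg *m U^T)).
  apply: mlim_mul; last exact: mlim_cst.
  apply: mlim_mul; last exact: mlim_cst.
  apply: mlim_mul; first exact: mlim_cst.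
  apply: mlim_mul; last exact: hF.
  apply: mlim_mul; last exact: mlim_cst.
  exact: mlim_tr.
move=> K.
set G := Gs Sg K0 K.
have oG : opb G (expR s - 1) by exact: opb_Gs.
have oGt := opb_tr g0 oG.
have oD : opb (Sg *m D *m Sg) mm.
  rewrite /D diag_sand; apply: opb_diag => // i.
  by have := mmi i; congr (`|_| <= _); ring.
have -> : U *m Sg *m ((Sg *m G *m Sg)^T *m D *m (Sg *m G *m Sg)) *m Sg *m U^T =
   U *m Sg *m Sg *m G^T *m (Sg *m D *m Sg) *m G *m Sg *m Sg *m U^T.
  by rewrite !trmx_mul tSg !mulmxA.
apply: (opb_le (a := 1 * 1 * 1 * (expR s - 1) * mm * (expR s - 1) * 1 * 1 * 1)); last first.
  by rewrite le_eqVlt; apply/orP; left; apply/eqP; ring.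
do 8 (apply: opb_mul; [by rewrite ?mulr_ge0 ?ler01 | | done]).
done.
Qed.
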